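(* Let $C \subset \mathbb{R}^n$ be convex and closed with nonempty interior, and let $h\colon C\to\mathbb{R}$ be Legendre on $C$, continuous on $C$, and satisfy condition (B): for every sequence $(x_k)_{k\in\mathbb{N}} \subset \mathrm{int}\, C$ and every $y \in C$, if $x_k \to y$ then $D_h(y,x_k) \to 0$. Let $a \in \mathrm{bd}\, C$ be an extreme point of $C$ and let $y \in C$ with $y \neq a$. Then for any $\epsilon > 0$ and $K > 0$ there exists $c \in \mathrm{int}\, C$ such that $\|c - a\| \le \epsilon$ and $D_h(y,c) \ge K$.
   Context: A convex function $h \colon C \to \mathbb{R}$ on a convex set $C\subset\mathbb{R}^n$ with nonempty interior is called Legendre if (1) $h$ is continuously differentiable on $\mathrm{int}\, C$ and $\|\nabla h(x)\| \to +\infty$ whenever $x \in \mathrm{int}\, C$ approaches a point of the boundary of $C$; and (2) $h$ is strictly convex on $\mathrm{int}\, C$. The Bregman divergence is $D_h(y,x) = h(y) - h(x) - \langle \nabla h(x), y - x\rangle$ for $y \in C$, $x \in \mathrm{int}\, C$. $\mathrm{bd}\, C$ denotes the boundary of $C$. *)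

(* Defs.v *)
From HB Require Import structures.
From mathcomp Require Import all_boot all_order all_algebra.
From mathcomp Require Import all_classical all_reals all_analysis.
Set Implicit Arguments. Unset Strict Implicit. Unset Printing Implicit Defensive.
Import Order.TTheory GRing.Theory Num.Theory.
Import numFieldNormedType.Exports.
Local Open Scope classical_set_scope.
Local Open Scope ring_scope.

Section Defs.
Context {R : realType} {n : nat}.
Local Notation V := 'rV[R]_n.

Definition dotv (u v : V) : R := \sum_(i < n) u 0 i * v 0 i.
Definition enorm (u : V) : R := Num.sqrt (dotv u u).

Definition grad (h : V -> R) (x : V) : V :=
  \row_(i < n) ('d h x (delta_mx 0 i : V)).

Definition convexset (C : set V) : Prop :=
  forall x y t, C x -> C y -> 0 <= t <= 1 -> C (t *: x + (1 - t) *: y).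

Definition convex_on (C : set V) (h : V -> R) : Prop :=
  forall x y t, C x -> C y -> 0 <= t <= 1 ->
    h (t *: x + (1 - t) *: y) <= t * h x + (1 - t) * h y.

Definition strictly_convex_on (C : set V) (h : V -> R) : Prop :=
  forall x y t, C x -> C y -> x != y -> 0 < t < 1 ->
    h (t *: x + (1 - t) *: y) < t * h x + (1 - t) * h y.

Definition boundary (C : set V) : set V := closure C `\` interior C.

Definition legendre (C : set V) (h : V -> R) : Prop :=
  [/\ convex_on C h,
      (forall x, interior C x -> differentiable h x /\ grad h @ x --> grad h x),
      (forall b, boundary C b -> forall M : R, exists2 d : R, 0 < d &
          forall x, interior C x -> enorm (x - b) < d -> M <= enorm (grad h x))
    &
      strictly_convex_on (interior C) h].

Definition bregman (h : V -> R) (y x : V) : R :=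
  h y - h x - dotv (grad h x) (y - x).

Definition extreme_point (C : set V) (a : V) : Prop :=
  C a /\ forall x y t, C x -> C y -> 0 < t < 1 -> a = t *: x + (1 - t) *: y ->
    x = a /\ y = a.

End Defs.

(* Main.v *)
Require Import Defs.
From HB Require Import structures.
From mathcomp Require Import all_boot all_order all_algebra.
From mathcomp Require Import all_classical all_reals all_analysis.
From mathcomp Require Import ring lra.
Import Order.TTheory GRing.Theory Num.Theory.
Import numFieldNormedType.Exports.
Local Open Scope classical_set_scope.
Local Open Scope ring_scope.

Lemma arith (R : realFieldType) (hx hw hc hy L rho G P K s : R) :
  L <= hc -> 0 < s -> 0 < rho -> hx + (rho * G - s * P) <= hw -> hw < hc + 1 -> L <= hx ->
  hc + 1 - L + `|K - hy + hc + 1| + rho <= rho * G ->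
  K <= hy - hx - - ((1 + s) * P).
Proof.
move=> h5 s0 r0 h1 h2 h3 h4.
have kk : K - hy + hc + 1 <= `|K - hy + hc + 1| by apply: ler_norm.
have k0 := normr_ge0 (K - hy + hc + 1).
have sP : 0 < s * P by lra.
have P0 : 0 < P by move: sP; rewrite pmulr_rgt0.
rewrite mulrDl mul1r; lra.
Qed.

Section H.
Context {R : realType} {n : nat}.
Local Notation V := 'rV[R]_n.

Lemma dotvDr (g u v : V) : dotv g (u + v) = dotv g u + dotv g v.
Proof. by rewrite /dotv -big_split /=; apply: eq_bigr => i _; rewrite mxE mulrDr. Qed.
Lemma dotvZr (g u : V) (k : R) : dotv g (k *: u) = k * dotv g u.
Proof. by rewrite /dotv mulr_sumr; apply: eq_bigr => i _; rewrite mxE mulrCA. Qed.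
Lemma dotvNr (g u : V) : dotv g (- u) = - dotv g u.
Proof. by rewrite -scaleN1r dotvZr mulN1r. Qed.
Lemma dotvBr (g u v : V) : dotv g (u - v) = dotv g u - dotv g v.
Proof. by rewrite dotvDr dotvNr. Qed.
Lemma dotvZl (g u : V) (k : R) : dotv (k *: g) u = k * dotv g u.
Proof. by rewrite /dotv mulr_sumr; apply: eq_bigr => i _; rewrite mxE mulrA. Qed.
Lemma dotvv_ge0 (u : V) : 0 <= dotv u u.
Proof. by apply: sumr_ge0 => i _; rewrite -expr2 sqr_ge0. Qed.

Lemma enorm_sqr (u : V) : enorm u ^+ 2 = dotv u u.
Proof. by rewrite /enorm sqr_sqrtr // dotvv_ge0. Qed.

Lemma entry_le_norm (u : V) i : `|u 0 i| <= `|u|.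
Proof.
have /mapP[j Hj ->] : `|u ord0 i| \in [seq `|u x.1 x.2| | x : 'I_1 * 'I_n].
  by apply/mapP; exists (ord0, i) => //=; rewrite mem_enum.
by rewrite [leRHS]/Num.norm /= mx_normrE; apply/bigmax_geP; right => /=; exists j.
Qed.

Lemma norm_le_enorm (u : V) : `|u| <= enorm u.
Proof.
rewrite [leLHS]/Num.norm /= mx_normrE; apply/bigmax_leP; split; first exact: sqrtr_ge0.
move=> [i j] _ /=; rewrite (ord1 i).
rewrite -(sqrtr_sqr (u 0 j)) /enorm ler_sqrt ?dotvv_ge0 //.
rewrite /dotv (bigD1 j) //= expr2 lerDl; apply: sumr_ge0 => k _.
by rewrite -expr2 sqr_ge0.
Qed.

Lemma enorm_le_norm (u : V) : enorm u <= (Num.sqrt n%:R + 1) * `|u|.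
Proof.
apply: (@le_trans _ _ (Num.sqrt n%:R * `|u|)); last first.
  by rewrite ler_wpM2r // lerDl.
have -> : Num.sqrt n%:R * `|u| = Num.sqrt (n%:R * `|u| ^+ 2).
  by rewrite sqrtrM // sqrtr_sqr normr_id.
rewrite /enorm ler_sqrt ?mulr_ge0 ?sqr_ge0 //.
rewrite /dotv -[n in n%:R]card_ord -sumr_const.
rewrite mulr_suml; apply: ler_sum => i _; rewrite mul1r.
by rewrite -expr2 -real_normK ?num_real // lerXn2r ?nnegrE // entry_le_norm.
Qed.

Lemma dot_grad (h : V -> R) x (v : V) : dotv (grad h x) v = 'd h x v.
Proof.
rewrite [in RHS](row_sum_delta v) linear_sum /dotv; apply: eq_bigr => i _.
by rewrite linearZ /= mxE mulrC.
Qed.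

Lemma grad_ineq (C : set V) (h : V -> R) x w :
  convex_on C h -> C x -> differentiable h x -> C w ->
  h x + dotv (grad h x) (w - x) <= h w.
Proof.
move=> hconv Cx dx Cw; rewrite dot_grad -deriveE //.
rewrite -lerBrDl.
have /cvg_ex[l Hl] := @diff_derivable _ _ _ h x (w - x) dx.
have Hl' : (fun t : R => t^-1 *: ((h \o shift x) (t *: (w - x)) - h x)) @ 0^'+ --> l.
  apply: cvg_trans Hl; apply: cvg_app => P [e /= e0 He].
  exists e => // t /= Ht t0; apply: He => //; exact: lt0r_neq0.
rewrite /derive (cvg_lim _ Hl) //.
apply: (cvgr_to_le Hl'); near=> t.
have t0 : 0 < t by near: t; exact: nbhs_right_gt.
have t1 : t <= 1 by near: t; apply: nbhs_right_le; exact: ltr01.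
rewrite /=.

have -> : t *: (w - x) + x = t *: w + (1 - t) *: x.
  by rewrite scalerBr scalerBl scale1r -addrA [- _ + x]addrC.
have := hconv w x t Cw Cx; rewrite t1 ltW // => /(_ isT) H.
rewrite /= /GRing.scale /= ler_pdivrMl // mulrBr.
by rewrite lerBlDr; apply: (le_trans H); rewrite mulrBl mul1r; lra.
Unshelve. all: by end_near.
Qed.

Lemma interiorP (C : set V) x : interior C x <-> exists2 e : R, 0 < e & forall z, `|x - z| < e -> C z.
Proof.
rewrite /interior /= nbhs_ballP; split => -[e e0 He]; exists e => // z.
  by move=> Hz; apply: He; rewrite -ball_normE.
by rewrite -ball_normE => Hz; apply: He.
Qed.

Lemma int_seg (C : set V) p q t : convexset C -> interior C p -> C q -> 0 < t <= 1 ->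
  interior C (t *: p + (1 - t) *: q).
Proof.
move=> Cc /interiorP[e e0 He] Cq /andP[t0 t1]; apply/interiorP.
exists (t * e); first exact: mulr_gt0.
move=> z Hz.
have -> : z = t *: (p + t^-1 *: (z - (t *: p + (1 - t) *: q))) + (1 - t) *: q.
  rewrite scalerDr scalerA mulfV ?gt_eqF // scale1r.
  set A := t *: p; set B := (1 - t) *: q.
  by rewrite addrCA opprD addNKr subrK.
apply: Cc => //; last by rewrite (ltW t0).
apply: He; rewrite opprD addrA subrr add0r normrN normrZ gtr0_norm ?invr_gt0 //.
by rewrite -distrC mulrC ltr_pdivrMr // mulrC.
Qed.

Lemma int_near (C : set V) z0 a (d : R) : convexset C -> interior C z0 -> C a -> 0 < d ->
  exists c, interior C c /\ `|c - a| < d.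
Proof.
move=> Cc iz Ca d0.
pose tau := Order.min 1 (d / (2 * (`|z0 - a| + 1))).
have k0 : 0 < d / (2 * (`|z0 - a| + 1)) by rewrite divr_gt0 // mulr_gt0 // ltr_wpDl.
have t0 : 0 < tau by rewrite lt_min ltr01 k0.
have t1 : tau <= 1 by rewrite ge_min lexx.
exists (tau *: z0 + (1 - tau) *: a); split; first by apply: int_seg => //; rewrite t0 t1.
have -> : tau *: z0 + (1 - tau) *: a - a = tau *: (z0 - a).
  by apply/rowP => i; rewrite !mxE; ring.
rewrite normrZ gtr0_norm //.
apply: (@le_lt_trans _ _ (d / (2 * (`|z0 - a| + 1)) * `|z0 - a|)).
  by rewrite ler_wpM2r // ge_min lexx orbT.
rewrite mulrAC ltr_pdivrMr ?mulr_gt0 ?ltr_wpDl //.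
have : 0 <= `|z0 - a| by [].
move=> hz; rewrite mulrA; nra.
Qed.

Lemma cont_bound (h : V -> R) c : differentiable h c ->
  exists2 r : R, 0 < r & forall w, `|c - w| < r -> h w < h c + 1.
Proof.
move=> /differentiable_continuous hc.
have := @cvgr_dist_lt _ _ _ _ _ h _ hc 1 ltr01.
move=> /(_ _) H; have [r r0 Hr] := (nbhs_ballP _ _).1 H.
exists r => // w Hw; have := Hr w; rewrite -ball_normE /= => /(_ Hw).
by rewrite distrC ltr_distl => /andP[_]; rewrite addrC.
Qed.

Lemma breg_bound (C : set V) h c y s eta rho K :
  convex_on C h -> C c -> differentiable h c ->
  C (c + s *: (c - y)) -> differentiable h (c + s *: (c - y)) -> 0 < s -> s <= eta -> 0 < rho ->
  (forall z, `|c - z| <= rho -> C z /\ h z < h c + 1) ->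
  (h c + 1 - (h c - eta * `|dotv (grad h c) (c - y)|)) / rho
    + `|K - h y + h c + 1| / rho + 1 <= enorm (grad h (c + s *: (c - y))) ->
  K <= bregman h y (c + s *: (c - y)).
Proof.
move=> hconv Cc dc Cx dx s0 se rho0 hball.
set v := c - y; set x := c + s *: v.
set L := h c - eta * `|dotv (grad h c) v|.
set g := grad h x; set G := enorm g => HG.
have LC : L <= h c by rewrite /L lerBlDr lerDl mulr_ge0 //; lra.
have a0 : 0 <= h c + 1 - L by lra.
have rhoM : rho * ((h c + 1 - L) / rho + `|K - h y + h c + 1| / rho + 1)
   = (h c + 1 - L) + `|K - h y + h c + 1| + rho.
  by rewrite mulrDr mulrDr mulr1 !(mulrC rho) !divfK // lt0r_neq0.
have M1 : 1 <= (h c + 1 - L) / rho + `|K - h y + h c + 1| / rho + 1.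
  by rewrite lerDr addr_ge0 // divr_ge0 // ltW.
have G0 : 0 < G by lra.
have gg : dotv g g = G ^+ 2 by rewrite enorm_sqr.
pose u := G^-1 *: g.
pose w := c + rho *: u.
have nu : `|u| <= 1.
  rewrite /u normrZ gtr0_norm ?invr_gt0 // -(mulVf (lt0r_neq0 G0)).
  rewrite ler_wpM2l //; [by rewrite invr_ge0 ltW | exact: norm_le_enorm].
have cw : `|c - w| <= rho.
  have -> : c - w = - (rho *: u) by rewrite /w opprD addrA subrr add0r.
  by rewrite normrN normrZ (gtr0_norm rho0) -[leRHS]mulr1 ler_wpM2l // ltW.
have [Cw hw] := hball w cw.
have gi1 := grad_ineq _ _ _ _ hconv Cx dx Cw.
have ewx : w - x = rho *: u - s *: v by rewrite /w /x opprD addrACA subrr add0r.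
rewrite ewx in gi1.
have gu : dotv g u = G by rewrite /u dotvZr gg expr2 mulKf // lt0r_neq0.
move: gi1; rewrite dotvBr (dotvZr g u rho) gu dotvZr => gi1.
have gi2 := grad_ineq _ _ _ _ hconv Cc dc Cx.
move: gi2; rewrite /x addrAC subrr add0r dotvZr => gi2.
have hL : L <= h x.
  apply: le_trans gi2; rewrite /L lerD2l.
  rewrite -/v; set P0 := dotv (grad h c) v.
  have hn' : - `|P0| <= P0 by rewrite lerNl -normrN ler_norm.
  apply: (@le_trans _ _ (s * - `|P0|)).
    by rewrite mulrN lerN2 ler_wpM2r.
  by rewrite ler_wpM2l // ltW.
have eyx : y - x = - ((1 + s) *: v) by rewrite /x /v; apply/rowP => i; rewrite !mxE; ring.
rewrite /bregman -/x -/g eyx dotvNr dotvZr.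
have rG : rho * ((h c + 1 - L) / rho + `|K - h y + h c + 1| / rho + 1) <= rho * G.
  by rewrite ler_wpM2l // ltW.
rewrite rhoM in rG.
exact: (@arith R (h x) (h w) (h c) (h y) L rho G (dotv g v) K s LC s0 rho0 gi1 hw hL rG).
Qed.
End H.

Theorem lemma2 (R : realType) (n : nat) (C : set 'rV[R]_n) (h : 'rV[R]_n -> R)
  (hCconv : convexset C) (hCclosed : closed C) (hCint : interior C !=set0)
  (hleg : legendre C h) (hcont : {within C, continuous h})
  (hB : forall (x : nat -> 'rV[R]_n) (y : 'rV[R]_n),
      (forall k, interior C (x k)) -> C y -> x @ \oo --> y ->
      (fun k => bregman h y (x k)) @ \oo --> (0 : R))
  (a y : 'rV[R]_n) (ha_bd : boundary C a) (ha_ext : extreme_point C a)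
  (hy : C y) (hya : y != a) :
  forall eps K : R, 0 < eps -> 0 < K ->
    exists c, [/\ interior C c, enorm (c - a) <= eps & K <= bregman h y c].
Proof.
move=> eps K eps0 K0.
case: hleg => hconv hdiff hblow _.
case: ha_ext => Ca hext.
pose Nn : R := Num.sqrt n%:R + 1.
have Nn0 : 0 < Nn by rewrite ltr_wpDl.
pose e' := eps / Nn.
have e'0 : 0 < e' by rewrite divr_gt0.
have Nne : Nn * e' = eps by rewrite /e' mulrC divfK // gt_eqF.
have EN : forall u : 'rV[R]_n, enorm u <= Nn * `|u| by move=> u; exact: enorm_le_norm.
clearbody e' Nn.
pose L0 : R := `|a - y|.
pose eta := e' / (4 * (1 + L0)).
have L00 : 0 <= L0 by apply: normr_ge0.
have eta0 : 0 < eta by rewrite divr_gt0 //; lra.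
have etaL : eta * (1 + L0) = e' / 4.
  have h1 : 1 + L0 != 0 by rewrite gt_eqF //; lra.
  by rewrite /eta; field; rewrite h1; lra.
clearbody eta.
have nCfa : ~ C (a + eta *: (a - y)).
  move=> Cfa.
  have h1e : 1 < 1 + eta by lra.
  have h0e : 0 < 1 + eta by lra.
  have e1 : 1 + eta != 0 by rewrite gt_eqF.
  have t01 : 0 < (1 + eta)^-1 < 1.
    by rewrite invr_gt0 h0e /= invf_lt1.
  have := hext _ _ (1 + eta)^-1 Cfa hy t01.
  case; last by move=> _ ya; move/eqP: hya.
  by apply/rowP => i; rewrite !mxE; field.
have [d0 d00 Hd0] : exists2 d0 : R, 0 < d0 & forall z, `|a + eta *: (a - y) - z| < d0 -> ~ C z.
  have := closed_openC hCclosed (a + eta *: (a - y)) nCfa.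
  by move/(@interiorP R n).
have h0e : 0 < 1 + eta by lra.
have dpos : 0 < Order.min (d0 / (1 + eta)) (Order.min (e' / 4) 1).
  by rewrite !lt_min !divr_gt0 // ltr01.
have [c [ic ca]] := @int_near R n C _ a _ hCconv (projT2 (cid hCint)) Ca dpos.
have Cc : C c := interior_subset ic.
move: ca; rewrite !lt_min => /and3P[ca1 ca2 ca3].
have nCfc : ~ C (c + eta *: (c - y)).
  apply: Hd0.
  have -> : a + eta *: (a - y) - (c + eta *: (c - y)) = (1 + eta) *: (a - c).
    by apply/rowP => i; rewrite !mxE; ring.
  by rewrite normrZ gtr0_norm // distrC -ltr_pdivlMl // mulrC.
pose v := c - y.
pose S := [set s : R | 0 <= s /\ C (c + s *: v)].
have S0 : S 0 by split => //; rewrite scale0r addr0.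
have Sub : ubound S eta.
  move=> s [s0 Cs]; rewrite leNgt; apply/negP => es; apply: nCfc.
  have sp : 0 < s by lra.
  have -> : c + eta *: (c - y) = (eta / s) *: (c + s *: v) + (1 - eta / s) *: c.
    by apply/rowP => i; rewrite !mxE; field; rewrite gt_eqF.
  apply: hCconv => //; rewrite divr_ge0 ?ltW //=.
  by rewrite ltr_pdivrMr // mul1r.
have hsS : has_sup S by split; [exists 0 | exists eta].
pose sig := sup S.
have sig0 : 0 <= sig := sup_upper_bound hsS S0.
have sigeta : sig <= eta := ge_sup (ex_intro _ 0 S0) Sub.
pose b := c + sig *: v.
have nv0 : 0 <= `|v| by [].
have Cb : C b.
  rewrite ((closure_id C).1 hCclosed) => B /nbhs_ballP[e e0 He].
  have ee0 : 0 < e / (`|v| + 1) by rewrite divr_gt0 // ltr_wpDl.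
  have [s' Ss' Hs'] := sup_adherent ee0 hsS.
  have s'sig : s' <= sig := sup_upper_bound hsS Ss'.
  exists (c + s' *: v); split; first exact: Ss'.2.
  apply: He; rewrite -ball_normE /=.
  have -> : b - (c + s' *: v) = (sig - s') *: v.
    by apply/rowP => i; rewrite !mxE; ring.
  rewrite normrZ ger0_norm ?subr_ge0 //.
  apply: (@le_lt_trans _ _ (e / (`|v| + 1) * `|v|)).
    by rewrite ler_wpM2r // ltW // ltrBlDr -ltrBlDl.
  rewrite mulrAC ltr_pdivrMr ?ltr_wpDl //.
  by rewrite ltr_pM2l // ltrDl.
have nib : ~ interior C b.
  move=> /(@interiorP R n) [r r0 Hr].
  pose t := r / (2 * (`|v| + 1)).
  have t0 : 0 < t by rewrite divr_gt0 // mulr_gt0 // ltr_wpDl.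
  have : S (sig + t).
    split; first by rewrite addr_ge0 // ltW.
    apply: Hr.
    have -> : b - (c + (sig + t) *: v) = - (t *: v).
      by apply/rowP => i; rewrite !mxE; ring.
    rewrite normrN normrZ gtr0_norm // /t mulrAC ltr_pdivrMr ?mulr_gt0 ?ltr_wpDl //.
    nra.
  move/(sup_upper_bound hsS); rewrite -/sig; lra.
have sigp : 0 < sig.
  rewrite lt_neqAle sig0 andbT; apply/negP => /eqP s0; apply: nib.
  by rewrite /b -s0 scale0r addr0.
clearbody sig.
have [r0 r00 Hr0] := (@interiorP R n C c).1 ic.
have [r1 r10 Hr1] := @cont_bound R n h c (proj1 (hdiff c ic)).
pose rho := Order.min r0 r1 / 2.
have m0 : 0 < Order.min r0 r1 by rewrite lt_min r00 r10.
have rho0 : 0 < rho by rewrite /rho; lra.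
have rr : rho < Order.min r0 r1 by rewrite /rho; lra.
clearbody rho.
pose L := h c - eta * `|dotv (grad h c) v|.
pose M := (h c + 1 - L) / rho + `|K - h y + h c + 1| / rho + 1.
have [d d0' Hd] := hblow b (conj (subset_closure Cb) nib) M.
pose mu := Order.min (d / Nn) (e' / 4).
have mu0 : 0 < mu by rewrite lt_min !divr_gt0.
have mud : mu <= d / Nn by rewrite ge_min lexx.
have mue : mu <= e' / 4 by rewrite ge_min lexx orbT.
clearbody mu.
pose tau := Order.min (sig / 2) (mu / (`|v| + 1)).
pose s := sig - tau.
pose x := c + s *: v.
have tau0 : 0 < tau by rewrite lt_min divr_gt0 // ?divr_gt0 // ltr_wpDl.
have tau1 : tau <= sig / 2 by rewrite ge_min lexx.
have tau2 : tau <= mu / (`|v| + 1) by rewrite ge_min lexx orbT.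
clearbody tau.
have s0 : 0 < s by rewrite /s; lra.
have ssig : s < sig by rewrite /s; lra.
have ix : interior C x.
  have -> : x = (1 - s / sig) *: c + (1 - (1 - s / sig)) *: b.
    by apply/rowP => i; rewrite !mxE; field; rewrite gt_eqF.
  apply: int_seg => //; apply/andP; split.
    by rewrite subr_gt0 ltr_pdivrMr // mul1r.
  by rewrite lerBlDr lerDl divr_ge0 // ltW.
have xb : `|x - b| < mu.
  have -> : x - b = - (tau *: v).
    apply/rowP => i; rewrite !mxE /s.
    generalize (c 0 i) (y 0 i) tau sig => p q t u; ring.
  rewrite normrN normrZ (gtr0_norm tau0).
  apply: (@le_lt_trans _ _ (mu / (`|v| + 1) * `|v|)); first exact: ler_wpM2r.
  have v1 : 0 < `|v| + 1 by lra.
  rewrite mulrAC (ltr_pdivrMr _ _ v1) (ltr_pM2l mu0); lra.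
have exb : enorm (x - b) < d.
  apply: (le_lt_trans (EN _)).
  apply: (@lt_le_trans _ _ (Nn * mu)); first by rewrite (ltr_pM2l Nn0).
  by move: mud; rewrite (ler_pdivlMr _ _ Nn0) mulrC.
have HG := Hd x ix exb.
exists x; split; first exact: ix.
  apply: (le_trans (EN _)); rewrite -Nne (ler_pM2l Nn0).
  have -> : x - a = (x - b) + sig *: v + (c - a).
    apply/rowP => i; rewrite !mxE /s.
    generalize (c 0 i) (y 0 i) (a 0 i) tau sig => p q r t u; ring.
  have hv : `|v| <= 1 + L0.
    have -> : v = (c - a) + (a - y) by rewrite /v addrA subrK.
    apply: (le_trans (ler_normD _ _)); rewrite /L0; lra.
  have hsv : sig * `|v| <= e' / 4 by rewrite -etaL; nra.
  apply: (le_trans (ler_normD _ _)); apply: (le_trans (lerD (ler_normD _ _) (lexx _))).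
  rewrite normrZ (ger0_norm sig0); lra.
have dx : differentiable h x := proj1 (hdiff x ix).
have Cx : C x := interior_subset ix.
have se : s <= eta by apply: (le_trans (ltW ssig)).
have hball : forall z, `|c - z| <= rho -> C z /\ h z < h c + 1.
  move: rr; rewrite lt_min => /andP[rr0 rr1] z hz; split.
    by apply: Hr0; apply: le_lt_trans hz rr0.
  by apply: Hr1; apply: le_lt_trans hz rr1.
exact: (@breg_bound R n C h c y s eta rho K hconv Cc (proj1 (hdiff c ic)) Cx dx s0 se rho0 hball HG).
Qed.
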